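(* Let $G$ be a $K_3$-free graph and let $P=X_PY_P$ and $Q=X_QY_Q$ be two bicliques of $G$ that are not mutually included and satisfy $X_P\cap X_Q\neq\emptyset$. Then there is a biclique $R=X_RY_R$ of $G$ with $X_R=X_P\cap X_Q$ and $Y_R\supseteq Y_P\cup Y_Q$.
   Context: All graphs are finite and simple. A biclique of a graph $G$ is a set $P\subseteq V(G)$ such that the induced subgraph $G[P]$ is a complete bipartite graph with both parts nonempty, and $P$ is inclusion-maximal with this property. Since $G[P]$ is connected, its bipartition into two nonempty independent sets $X,Y$ (every vertex of $X$ adjacent to every vertex of $Y$) is unique; we write $P=XY$ to mean $P=X\cup Y$ with $X,Y$ these two parts, called the sides of $P$. Two bicliques $P,Q$ of $G$ are mutually included if their sides can be named $P=X_PY_P$, $Q=X_QY_Q$ so that $X_Q\subsetneq X_P$ and $Y_P\subsetneq Y_Q$. *)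

(* Defs.v *)
From mathcomp Require Import all_boot.
Set Implicit Arguments. Unset Strict Implicit. Unset Printing Implicit Defensive.

Section Graphs.
Variables (T : finType) (e : rel T).

Definition simple_graph : Prop := symmetric e /\ irreflexive e.

Definition K3_free : Prop :=
  forall x y z : T, ~ [&& e x y, e y z & e x z].

Definition independent (A : {set T}) : Prop :=
  forall x y, x \in A -> y \in A -> ~~ e x y.

Definition complete_bip (X Y : {set T}) : Prop :=
  [/\ X != set0, Y != set0, independent X, independent Y &
      forall x y, x \in X -> y \in Y -> e x y].

Definition cbip_set (P : {set T}) : Prop :=
  exists X Y : {set T}, P = X :|: Y /\ complete_bip X Y.

Definition biclique (P : {set T}) : Prop :=
  cbip_set P /\ forall P' : {set T}, P \subset P' -> cbip_set P' -> P' = P.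

(* P = XY : X, Y are the two sides of P *)
Definition sides (P X Y : {set T}) : Prop :=
  P = X :|: Y /\ complete_bip X Y.

Definition mutually_included (P Q : {set T}) : Prop :=
  exists XP YP XQ YQ : {set T},
    [/\ sides P XP YP, sides Q XQ YQ, XQ \proper XP & YP \proper YQ].

End Graphs.

(* Main.v *)
Require Import Defs.
From mathcomp Require Import all_boot.

Section S.
Variables (T : finType) (e : rel T).
Hypothesis esym : symmetric e.
Hypothesis eirr : irreflexive e.
Hypothesis k3 : K3_free e.

Definition cn (A : {set T}) : {set T} := [set v | [forall a in A, e v a]].

Lemma cnP (A : {set T}) v : reflect (forall a, a \in A -> e v a) (v \in cn A).
Proof.
rewrite inE; apply: (iffP forallP) => H a.
  by move=> aA; have := H a; rewrite aA.
by apply/implyP; apply: H.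
Qed.

Lemma cn_indep (A : {set T}) : A != set0 -> independent e (cn A).
Proof.
case/set0Pn=> a aA u v /cnP Hu /cnP Hv; apply/negP=> euv.
apply: (k3 a u v); rewrite (esym a u) (esym a v) (Hu a aA) (Hv a aA) euv //=.
Qed.

Lemma cb_sym X Y : complete_bip e X Y -> complete_bip e Y X.
Proof.
case=> h1 h2 h3 h4 h5; split=> // x y xY yX; rewrite esym; exact: h5.
Qed.

Lemma cn_side P X Y : biclique e P -> sides e P X Y -> cn Y \subset X.
Proof.
move=> [_ Pmax] [PE [X0 Y0 iX iY eXY]].
have cb : complete_bip e (cn Y) Y.
  split=> //.
  - case/set0Pn: X0 => x xX; apply/set0Pn; exists x; apply/cnP=> y yY; exact: eXY.
  - exact: cn_indep.
  - by move=> x y /cnP H yY; apply: H.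
have sub : P \subset cn Y :|: Y.
  apply/subsetP=> v; rewrite PE inE => /orP[vX|vY]; rewrite inE ?vY ?orbT //.
  by apply/orP; left; apply/cnP=> y yY; apply: eXY.
have := Pmax _ sub (ex_intro _ _ (ex_intro _ _ (conj erefl cb))) => EQ.
apply/subsetP=> v vC.
have : v \in P by rewrite -EQ inE vC.
rewrite PE inE => /orP[//|vY].
by move/cnP: vC => /(_ v vY); rewrite eirr.
Qed.

Lemma side_lemma (X YR X' Y' : {set T}) x0 :
  complete_bip e X' Y' -> (forall x y, x \in X -> y \in YR -> e x y) ->
  X \subset X' :|: Y' -> YR \subset X' :|: Y' -> YR != set0 ->
  x0 \in X -> x0 \in X' -> X \subset X' /\ YR \subset Y'.
Proof.
move=> [_ _ iX' iY' _] eXY sX sY YR0 x0X x0X'.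
have HY : YR \subset Y'.
  apply/subsetP=> y yY; move/subsetP: sY => /(_ y yY); rewrite inE => /orP[yX'|//].
  by have := iX' _ _ x0X' yX'; rewrite eXY.
split=> //; apply/subsetP=> x xX.
case/set0Pn: YR0 => y yY.
move/subsetP: sX => /(_ x xX); rewrite inE => /orP[//|xY'].
have yY' : y \in Y' by move/subsetP: HY; apply.
by have := iY' _ _ xY' yY'; rewrite eXY.
Qed.

End S.
Arguments cnP {T e}.
Arguments cn_indep {T e}.
Arguments cb_sym {T e}.
Arguments cn_side {T e}.
Arguments side_lemma {T e}.
Arguments cn {T} e A.

Theorem lemma1 (T : finType) (e : rel T) :
  simple_graph e -> K3_free e ->
  forall P Q XP YP XQ YQ : {set T},
    biclique e P -> biclique e Q ->
    sides e P XP YP -> sides e Q XQ YQ ->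
    ~ mutually_included e P Q ->
    XP :&: XQ != set0 ->
    exists YR : {set T},
      [/\ biclique e ((XP :&: XQ) :|: YR), sides e ((XP :&: XQ) :|: YR) (XP :&: XQ) YR
        & (YP :|: YQ) \subset YR].
Proof.
move=> [esym eirr] k3 P Q XP YP XQ YQ bP bQ sP sQ _ X0.
set X := XP :&: XQ.
have cP := cn_side esym eirr k3 _ _ _ bP sP.
have cQ := cn_side esym eirr k3 _ _ _ bQ sQ.
case: sP => _ [_ YP0 iXP _ eP].
case: sQ => _ [_ _ _ _ eQ].
have eX : forall x y, x \in X -> y \in cn e X -> e x y.
  by move=> x y xX /cnP H; rewrite esym; apply: H.
have sub : YP :|: YQ \subset cn e X.
  apply/subsetP=> y; rewrite inE => /orP[yP|yQ]; apply/cnP=> x;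
    rewrite inE => /andP[xP xQ]; rewrite esym; [exact: eP|exact: eQ].
have YR0 : cn e X != set0.
  case/set0Pn: YP0 => y yY; apply/set0Pn; exists y.
  by move/subsetP: sub; apply; rewrite inE yY.
have cb : complete_bip e X (cn e X).
  split=> //.
  - by move=> x y /setIP[xP _] /setIP[yP _]; apply: iXP.
  - exact: cn_indep.
exists (cn e X); split=> //; split.
  by exists X, (cn e X).
move=> P' sub' [X' [Y' [P'E cb']]].
case/set0Pn: (X0) => x0 x0X.
have sX : X \subset X' :|: Y'.
  by rewrite -P'E; apply: subset_trans sub'; apply: subsetUl.
have sY : cn e X \subset X' :|: Y'.
  by rewrite -P'E; apply: subset_trans sub'; apply: subsetUr.
wlog [HX HY] : X' Y' P'E cb' sX sY / X \subset X' /\ cn e X \subset Y'.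
  move=> W.
  have : x0 \in X' :|: Y' by move/subsetP: sX; apply.
  rewrite inE => /orP[x0X'|x0Y'].
    by apply: (W X' Y') => //; apply: (side_lemma _ _ _ _ x0 cb' eX).
  rewrite setUC in P'E sX sY.
  apply: (W Y' X') => //; first exact: cb_sym.
  by apply: (side_lemma _ _ _ _ x0 (cb_sym esym _ _ cb') eX).
case: cb' => _ _ _ _ eXY'.
apply/eqP; rewrite eqEsubset sub' andbT P'E.
apply/subsetP=> v; rewrite inE => /orP[vX'|vY'].
  have HYsub : forall Y : {set T}, Y \subset cn e X -> cn e X \subset Y' -> v \in cn e Y.
    move=> Y s1 s2; apply/cnP=> y yY; apply: eXY' => //.
    by move/subsetP: s2; apply; move/subsetP: s1; apply.
  have vP : v \in XP.
    move/subsetP: cP; apply; apply: HYsub => //.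
    by apply: subset_trans sub; apply: subsetUl.
  have vQ : v \in XQ.
    move/subsetP: cQ; apply; apply: HYsub => //.
    by apply: subset_trans sub; apply: subsetUr.
  by rewrite inE; apply/orP; left; rewrite inE vP vQ.
rewrite inE; apply/orP; right; apply/cnP=> x xX.
rewrite esym; apply: eXY' => //; by move/subsetP: HX; apply.
Qed.
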